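(* Let $(Q,\rightarrow)$ be a finite transition system, $\mathscr{R}$ a preorder on $Q$ and $\mathscr{P}\subseteq\mathscr{R}$ an equivalence relation. Then the following are equivalent: (i) for all $b,d,d'\in Q$ with $d\,\mathscr{P}\,d'$: $d\in\rightarrow^{-1}(\mathscr{R}(b))\iff d'\in\rightarrow^{-1}(\mathscr{R}(b))$; (ii) $\mathscr{P}\circ\rightarrow^{-1}\subseteq\rightarrow^{-1}\circ\mathscr{R}$.
   Context: For relations $\mathscr{R},\mathscr{S}$ on $Q$: $\mathscr{R}(q)=\{q'\mid q\,\mathscr{R}\,q'\}$, $\mathscr{R}(X)=\bigcup_{q\in X}\mathscr{R}(q)$, $\mathscr{R}^{-1}=\{(y,x)\mid(x,y)\in\mathscr{R}\}$, and $\mathscr{S}\circ\mathscr{R}=\{(x,y)\mid y\in\mathscr{S}(\mathscr{R}(x))\}$. A preorder is a reflexive transitive relation. Condition (i) is what the paper calls $\mathscr{P}$ being $\mathscr{R}$-block-stable; condition (ii) is $\mathscr{P}$ being $\mathscr{R}$-stable. *)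

(* Defs.v *)
From mathcomp Require Import all_boot.
Set Implicit Arguments. Unset Strict Implicit. Unset Printing Implicit Defensive.

Section Rel.
Variable Q : finType.

Definition rimg (R : rel Q) (q : Q) : pred Q := fun q' => R q q'.
Definition rimgS (R : rel Q) (X : pred Q) : pred Q :=
  fun q' => [exists q, X q && R q q'].
Definition rinv (R : rel Q) : rel Q := fun x y => R y x.
(* S o R = { (x,y) | y in S(R(x)) } *)
Definition rcomp (S R : rel Q) : rel Q := fun x y => rimgS S (rimg R x) y.

Definition is_preorder (R : rel Q) : Prop := reflexive R /\ transitive R.
Definition is_equivalence (R : rel Q) : Prop :=
  [/\ reflexive R, symmetric R & transitive R].
End Rel.

(* Main.v *)
Require Import Defs.
From mathcomp Require Import all_boot.

Theorem lemma2 (Q : finType) (trans R P : rel Q)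
  (HR : is_preorder R) (HP : is_equivalence P) (HPR : subrel P R) :
  (forall b d d' : Q, P d d' ->
     (rimgS (rinv trans) (rimg R b) d <-> rimgS (rinv trans) (rimg R b) d'))
  <-> subrel (rcomp P (rinv trans)) (rcomp (rinv trans) R).
Proof.
  case: HR => Rr Rt; case: HP => Pr Ps Pt.
  rewrite /rcomp /rimgS /rimg /rinv; split.
  - move=> H x y /existsP [q /andP [tqx Pqy]].
    have: [exists q0, R x q0 && trans q q0] by apply/existsP; exists x; rewrite Rr tqx.
    by case/(H x q y Pqy).
  - have key: forall d d' b, P d d' ->
      subrel (fun x y => [exists q, trans q x && P q y])
             (fun x y => [exists q, R x q && trans y q]) ->
      [exists q, R b q && trans d q] -> [exists q, R b q && trans d' q].
      move=> d d' b Pd H /existsP [q /andP [Rbq tdq]].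
      have: [exists q0, trans q0 q && P q0 d'] by apply/existsP; exists d; rewrite tdq Pd.
      move/H => /existsP [q' /andP [Rqq' td'q']].
      by apply/existsP; exists q'; rewrite td'q' (Rt _ _ _ Rbq Rqq').
    move=> H b d d' Pd; split; apply: key => //.
    by rewrite Ps.
Qed.
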